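(* Consider the following Markov decision process modelling transmit-power selection in an energy harvesting transmitter. Let $Q_{\max}$ be a positive integer. The state (battery level) at slot $t$ is $Q_t \in \{0,1,\dots,Q_{\max}\}$. In state $Q$ the allowed actions (transmit power levels) form a set $\mathcal{A}_Q \subseteq \{0,1,\dots,Q\}$, where $\mathcal{A}_0=\{0\}$ and, for $Q\ge 1$, every allowed action is positive, i.e. $\mathcal{A}_Q\subseteq\{1,\dots,Q\}$. The harvested energies $p_0,p_1,\dots$ are i.i.d. nonnegative integer random variables with $\Pr\{p_t=p\}>0$ for every $p\in\{0,1,\dots,Q_{\max}\}$. If action $q_t\in\mathcal{A}_{Q_t}$ is taken, the next state is $Q_{t+1}=\min\{Q_t-q_t+p_t,\;Q_{\max}\}$. Then this MDP is ergodic: for every deterministic stationary policy $\beta$ (a map assigning to each state $Q$ an action $\beta(Q)\in\mathcal{A}_Q$), the Markov chain of states induced by playing $\beta$ is irreducible and aperiodic. *)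

(* Defs.v *)
From HB Require Import structures.
From mathcomp Require Import all_boot all_order all_algebra.
From mathcomp Require Import all_classical all_reals all_analysis.
Set Implicit Arguments. Unset Strict Implicit. Unset Printing Implicit Defensive.
Import Order.TTheory GRing.Theory Num.Theory.
Import numFieldNormedType.Exports.
Local Open Scope ring_scope.

(* Transition matrix of the battery-level chain under a deterministic stationary
   policy [beta], when harvested energies are i.i.d. with pmf [h] on nat:
   P(i,j) = Pr{ min(i - beta(i) + p, Qmax) = j } = sum_p [min(..)=j] h(p). *)
Definition trans (R : realType) (Qmax : nat) (h : nat -> R)
    (beta : 'I_Qmax.+1 -> nat) : 'M[R]_(Qmax.+1) :=
  \matrix_(i, j) limn (fun n : nat => \sum_(0 <= p < n)
     (if minn (i - beta i + p) Qmax == (j : nat) then h p else 0)).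

Definition irreducible_mx (R : realType) (n : nat) (P : 'M[R]_(n.+1)) : Prop :=
  forall i j : 'I_n.+1, exists m : nat, 0 < (P ^+ m) i j.

Definition aperiodic_mx (R : realType) (n : nat) (P : 'M[R]_(n.+1)) : Prop :=
  forall i : 'I_n.+1, forall d : nat,
    (forall m : nat, (0 < m)%N -> 0 < (P ^+ m) i i -> (d %| m)%N) -> d = 1%N.

(* Main.v *)
Require Import Defs.
From HB Require Import structures.
From mathcomp Require Import all_boot all_order all_algebra.
From mathcomp Require Import all_classical all_reals all_analysis.
Import Order.TTheory GRing.Theory Num.Theory.
Import numFieldNormedType.Exports.
Local Open Scope classical_set_scope.
Local Open Scope ring_scope.

Lemma psum_nd {R : realType} (f : nat -> R) : (forall p, 0 <= f p) ->
  {homo (fun n => \sum_(0 <= p < n) f p) : n m / (n <= m)%N >-> n <= m}.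
Proof.
move=> f0 n m nm; rewrite (big_cat_nat (leq0n n) nm) /= lerDl.
by apply: sumr_ge0 => i _.
Qed.

Lemma psum_le_lim {R : realType} (f : nat -> R) (B : R) : (forall p, 0 <= f p) ->
  (forall n, \sum_(0 <= p < n) f p <= B) ->
  forall n, \sum_(0 <= p < n) f p <= limn (fun n => \sum_(0 <= p < n) f p).
Proof.
move=> f0 fB n; apply: nondecreasing_cvgn_le; first exact: psum_nd.
apply: nondecreasing_is_cvgn; first exact: psum_nd.
by exists B => _ [k _ <-].
Qed.

Lemma term_le_lim {R : realType} (f : nat -> R) (B : R) : (forall p, 0 <= f p) ->
  (forall n, \sum_(0 <= p < n) f p <= B) ->
  forall p, f p <= limn (fun n => \sum_(0 <= p < n) f p).
Proof.
move=> f0 fB p; apply: (le_trans _ (psum_le_lim _ _ f0 fB p.+1)).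
rewrite big_nat_recr //= lerDr; by apply: sumr_ge0 => i _.
Qed.

Lemma mul_pos {R : realType} n (A B : 'M[R]_n.+1) i k j :
  (forall a b, 0 <= A a b) -> (forall a b, 0 <= B a b) ->
  0 < A i k -> 0 < B k j -> 0 < (A * B) i j.
Proof.
move=> A0 B0 Ap Bp; rewrite -mulmxE mxE (bigD1 k) //=.
apply: ltr_pwDl; first exact: mulr_gt0.
by apply: sumr_ge0 => a _; rewrite mulr_ge0.
Qed.

Lemma mul_ge0 {R : realType} n (A B : 'M[R]_n.+1) :
  (forall a b, 0 <= A a b) -> (forall a b, 0 <= B a b) ->
  forall a b, 0 <= (A * B) a b.
Proof.
move=> A0 B0 a b; rewrite -mulmxE mxE; apply: sumr_ge0 => c _; exact: mulr_ge0.
Qed.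

Lemma exp_ge0 {R : realType} n (A : 'M[R]_n.+1) :
  (forall a b, 0 <= A a b) -> forall m a b, 0 <= (A ^+ m) a b.
Proof.
move=> A0; elim=> [|m IH] a b.
  by rewrite expr0 mxE; case: (a == b).
by rewrite exprS; apply: mul_ge0.
Qed.

From mathcomp Require Import zify.

Theorem proposition1 (R : realType) (Qmax : nat) (HQ : (0 < Qmax)%N)
  (A : nat -> pred nat)
  (HA0 : forall q : nat, A 0%N q = (q == 0%N))
  (HApos : forall Q q : nat, (1 <= Q)%N -> A Q q -> (1 <= q <= Q)%N)
  (h : nat -> R)
  (h_ge0 : forall p : nat, 0 <= h p)
  (h_sum1 : series h @ \oo --> (1%:R : R))
  (h_pos : forall p : nat, (p <= Qmax)%N -> 0 < h p) :
  forall beta : 'I_Qmax.+1 -> nat,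
    (forall Q : 'I_Qmax.+1, A Q (beta Q)) ->
    irreducible_mx (trans h beta) /\ aperiodic_mx (trans h beta).
Proof.
move=> beta hb.
have ser1 : forall n, series h n <= 1.
  move=> n; have -> : (1 : R) = limn (series h) by rewrite (cvg_lim _ h_sum1).
  apply: nondecreasing_cvgn_le; last by apply/cvg_ex; exists 1.
  move=> a b ab; rewrite /series /=; exact: psum_nd.
set P := trans h beta.
have hf0 : forall (i j : 'I_Qmax.+1) p,
   0 <= (if minn (i - beta i + p) Qmax == (j : nat) then h p else 0).
  by move=> i j p; case: ifP.
have hfB : forall (i j : 'I_Qmax.+1) n,
   \sum_(0 <= p < n) (if minn (i - beta i + p) Qmax == (j : nat) then h p else 0) <= 1.
  move=> i j n; apply: le_trans (ser1 n); rewrite /series /=.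
  by apply: ler_sum => p _; case: ifP.
have P0 : forall a b, 0 <= P a b.
  move=> a b; rewrite /P /trans mxE.
  by have := psum_le_lim _ _ (hf0 a b) (hfB a b) 0; rewrite big_geq.
have Ppos : forall (i j : 'I_Qmax.+1) p, (p <= Qmax)%N ->
    minn (i - beta i + p) Qmax = j -> 0 < P i j.
  move=> i j p pQ e; rewrite /P /trans mxE.
  apply: (lt_le_trans (h_pos p pQ)).
  have := term_le_lim _ _ (hf0 i j) (hfB i j) p; by rewrite e eqxx.
have b0 : beta (inord 0) = 0%N.
  by have := hb (inord 0); rewrite inordK // HA0 => /eqP.
have bpos : forall a, (1 <= a <= Qmax)%N ->
    (1 <= beta (inord a) <= a)%N.
  move=> a /andP[a1 aQ]; have := HApos _ _ _ (hb (inord a)).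
  by rewrite inordK //; apply.
have down : forall a, (1 <= a <= Qmax)%N -> 0 < P (inord a) (inord a.-1).
  move=> a aH; have := bpos a aH; move: aH => /andP[a1 aQ] /andP[c1 c2].
  apply: (Ppos _ _ (beta (inord a)).-1); first lia.
  rewrite !inordK; lia.
have from0 : forall b, (b <= Qmax)%N -> 0 < P (inord 0) (inord b).
  move=> b bQ; apply: (Ppos _ _ b) => //; rewrite b0 !inordK; lia.
have Pm0 := @exp_ge0 _ _ P P0.
have to0 : forall a, (a <= Qmax)%N -> 0 < (P ^+ a) (inord a) (inord 0).
  elim=> [|a IH] aQ.
    by rewrite expr0 mxE eqxx ltr01.
  rewrite exprS; apply: (@mul_pos _ _ _ _ _ (inord a)) => //.
    by have := down a.+1; rewrite /=; apply; lia.
  apply: IH; lia.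
have reach : forall a b, (a <= Qmax)%N -> (b <= Qmax)%N ->
   0 < (P ^+ a.+1) (inord a) (inord b).
  move=> a b aQ bQ; rewrite exprSr; apply: (@mul_pos _ _ _ _ _ (inord 0)) => //.
    exact: to0.
  exact: from0.
have reach2 : forall a b, (a <= Qmax)%N -> (b <= Qmax)%N ->
   0 < (P ^+ a.+2) (inord a) (inord b).
  move=> a b aQ bQ; rewrite exprSr; apply: (@mul_pos _ _ _ _ _ (inord 0)) => //.
    exact: reach.
  exact: from0.
have ltQ : forall i : 'I_Qmax.+1, (i <= Qmax)%N.
  by move=> i; rewrite -ltnS; exact: ltn_ord.
have reachO : forall i j : 'I_Qmax.+1, 0 < (P ^+ i.+1) i j.
  by move=> i j; have := reach i j (ltQ i) (ltQ j); rewrite !inord_val.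
have reach2O : forall i j : 'I_Qmax.+1, 0 < (P ^+ i.+2) i j.
  by move=> i j; have := reach2 i j (ltQ i) (ltQ j); rewrite !inord_val.
split.
  by move=> i j; exists i.+1.
move=> i d Hd.
have d1 : (d %| i.+1)%N by apply: Hd.
have d2 : (d %| i.+2)%N by apply: Hd.
apply/eqP; rewrite -dvdn1.
by move: d2; rewrite -addn1 (dvdn_addr _ d1).
Qed.
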